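(* Consider the two-observation Lewis signaling game with observations $o_1,o_2$ (each occurring with probability $p(o_1)=p(o_2)=\tfrac12$), messages $m_1,m_2$, actions $a_1,a_2$, and reward $R(o_i,a_j)=1$ if $i=j$ and $R(o_i,a_j)=0$ if $i\neq j$. An instructor with parameter $S\in[0,1]$ sends message $m_j$ on observation $o_i$ with probability $\pi_S(m_j\mid o_i)=S$ if $i=j$ and $1-S$ otherwise; an executor with parameter $L\in[0,1]$ takes action $a_j$ on message $m_i$ with probability $\pi_L(a_j\mid m_i)=L$ if $i=j$ and $1-L$ otherwise. The expected reward is $$J(S,L)=\sum_{o,m,a}p(o)\,\pi_S(m\mid o)\,\pi_L(a\mid m)\,R(o,a)=\tfrac12 SL+\tfrac12(1-S)(1-L),$$ so that $\partial J/\partial S=L-\tfrac12$ and $\partial J/\partial L=S-\tfrac12$. Let $(S(t),L(t))_{t\ge 0}$ evolve by the clipped gradient flow: $\frac{dS}{dt}=L-\tfrac12$ and $\frac{dL}{dt}=S-\tfrac12$, except that the derivative of a parameter is set to $0$ whenever that parameter equals $0$ or $1$. Suppose the initial values satisfy $S(0),L(0)\in(0,1)$ and $L(0)+S(0)<1$. Then the agents undergo semantic drift: $L(t)$ converges to $0$ as $t\to\infty$.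
   Context: Messages are thought of as natural-language commands ($m_i$ means ''do $a_i$''), so an executor with $L>\tfrac12$ respects the natural-language meaning. An initialization $(S(0),L(0))$ is said to undergo executor semantic drift if, after training, $L<\tfrac12$. *)

(* Defs.v *)
From Stdlib Require Import Reals Lra.
From Coquelicot Require Import Coquelicot.
Open Scope R_scope.

Definition J (S L : R) : R := / 2 * S * L + / 2 * (1 - S) * (1 - L).

Definition clip (x v : R) : R :=
  if Req_EM_T x 0 then 0 else if Req_EM_T x 1 then 0 else v.

Definition has_right_deriv (f : R -> R) (t d : R) : Prop :=
  filterlim (fun h => (f (t + h) - f t) / h) (at_right 0) (locally d).

Definition clipped_flow (S L : R -> R) : Prop :=
  forall t, 0 <= t ->
    0 <= S t <= 1 /\ 0 <= L t <= 1 /\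
    (0 < t -> continuous S t /\ continuous L t) /\
    has_right_deriv S t (clip (S t) (L t - / 2)) /\
    has_right_deriv L t (clip (L t) (S t - / 2)).

(* Main.v *)
Require Import Defs.
From Stdlib Require Import Reals.
From Coquelicot Require Import Coquelicot.
Open Scope R_scope.
From Stdlib Require Import Lra.

Lemma ballR (x e y : R) : ball x e y <-> Rabs (y - x) < e.
Proof. split; intro H; exact H. Qed.

Lemma cont_bound f t : continuous f t -> forall eta, 0 < eta ->
  exists del, 0 < del /\ forall s, Rabs (s - t) < del -> Rabs (f s - f t) < eta.
Proof.
  intros H eta Heta.
  apply (proj1 (filterlim_locally _ _)) with (eps := mkposreal eta Heta) in H.
  destruct H as [del Hd].
  exists (pos del); split; [apply cond_pos|].
  intros s Hs. apply (Hd s). exact Hs.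
Qed.

Lemma clip0 v : clip 0 v = 0.
Proof. unfold clip. destruct (Req_EM_T 0 0); [reflexivity|lra]. Qed.

Lemma dneg S L c : 0 <= S <= 1 -> 0 <= L <= 1 -> 0 < S + L -> S + L <= 1 - c -> 0 < c -> c <= /2 ->
  clip S (L - /2) + clip L (S - /2) <= - c.
Proof.
  intros. unfold clip.
  destruct (Req_EM_T S 0); destruct (Req_EM_T S 1); destruct (Req_EM_T L 0); destruct (Req_EM_T L 1); lra.
Qed.

Lemma rd_bound f t d : has_right_deriv f t d -> forall eta, 0 < eta ->
  exists del, 0 < del /\ forall h, 0 < h < del ->
   f (t+h) - f t <= h*(d+eta) /\ f t - f (t+h) <= h*(eta - d).
Proof.
  intros H eta Heta.
  apply (proj1 (filterlim_locally _ _)) with (eps := mkposreal eta Heta) in H.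
  destruct H as [del Hd].
  exists (pos del); split; [apply cond_pos|].
  intros h [h0 h1].
  assert (B : ball 0 del h) by (apply ballR; rewrite Rminus_0_r, Rabs_right; lra).
  specialize (Hd h B h0). apply ballR in Hd. simpl in Hd.
  apply Rabs_def2 in Hd. destruct Hd as [Ha Hb]. unfold minus, plus, opp in Ha, Hb; simpl in Ha, Hb.
  set (q := (f (t + h) - f t) / h) in *.
  assert (E : (f (t+h) - f t) = h * q) by (unfold q; field; lra).
  split.
  - rewrite E. apply Rmult_le_compat_l. lra. lra.
  - replace (f t - f (t+h)) with (h * (-q)) by lra. apply Rmult_le_compat_l; lra.
Qed.

Lemma real_ind (P : R -> Prop) :
  P 0 ->
  (forall t, 0 <= t -> P t -> exists d, 0 < d /\ forall h, 0 < h < d -> P (t+h)) ->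
  (forall t, 0 < t -> (forall s, 0 <= s < t -> P s) -> P t) ->
  forall t, 0 <= t -> P t.
Proof.
  intros H0 Hstep Hlim b Hb.
  destruct (Classical_Prop.classic (P b)) as [Pb|nPb]; [exact Pb|exfalso].
  set (E := fun x => 0 <= x <= b /\ forall s, 0 <= s <= x -> P s).
  assert (Eb : bound E) by (exists b; intros x [Hx _]; lra).
  assert (E0 : exists x, E x).
  { exists 0. split; [lra|]. intros s Hs. replace s with 0 by lra. exact H0. }
  destruct (completeness E Eb E0) as [c [Hub Hlub]].
  assert (c0 : 0 <= c) by (apply Hub; split; [lra|]; intros s Hs; replace s with 0 by lra; exact H0).
  assert (cb : c <= b) by (apply Hlub; intros x [Hx _]; lra).
  assert (Hbelow : forall s, 0 <= s < c -> P s).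
  { intros s Hs. destruct (Classical_Prop.classic (exists x, E x /\ s <= x)) as [[x [[_ Hx] Hsx]]|Hn].
    - apply Hx; lra.
    - exfalso. assert (c <= s). { apply Hlub. intros x Ex.
        destruct (Rle_dec x s) as [|Hxs]; [lra|]. exfalso; apply Hn; exists x; split; [|lra]; exact Ex. }
      lra. }
  assert (Pc : P c).
  { destruct (Req_dec c 0) as [->|Hc]; [exact H0|]. apply Hlim; [lra|exact Hbelow]. }
  assert (Hcb : c < b).
  { destruct (Req_dec c b) as [e|]; [subst c; contradiction|lra]. }
  destruct (Hstep c c0 Pc) as [d [Hd Hh]].
  set (x := Rmin (c + d/2) b).
  assert (Ex : E x).
  { split. { unfold x; split; [apply Rmin_glb; lra| apply Rmin_r]. }
    intros s Hs. destruct (Rlt_le_dec s c) as [Hsc|Hsc].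
    - apply Hbelow; lra.
    - destruct (Req_dec s c) as [->|Hne]; [exact Pc|].
      replace s with (c + (s - c)) by ring. apply Hh.
      assert (x <= c + d/2) by apply Rmin_l. lra. }
  assert (x <= c) by (apply Hub; exact Ex).
  assert (c < x) by (unfold x; apply Rmin_glb_lt; lra). lra.
Qed.

Lemma invariant (Sf Lf : R -> R) (k e : R) :
  clipped_flow Sf Lf -> 0 < k -> 2 * k <= 1 - (Sf 0 + Lf 0) -> 2 * k <= /2 ->
  0 < e -> e <= Sf 0 + Lf 0 ->
  forall t, 0 <= t -> (Sf t + Lf t) + k * t <= Sf 0 + Lf 0 \/ Sf t + Lf t <= e.
Proof.
  intros Hf Hk Hk1 Hk2 He He0.
  set (W0 := Sf 0 + Lf 0) in *.
  apply real_ind.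
  - left. unfold W0; lra.
  - intros t Ht Pt.
    destruct (Hf t Ht) as [[HS0 HS1] [[HL0 HL1] [_ [dS dL]]]].
    destruct (Rlt_le_dec 0 (Sf t + Lf t)) as [Wpos|Wle].
    + assert (Wt : Sf t + Lf t <= W0).
      { assert (0 <= k * t) by (apply Rmult_le_pos; lra). destruct Pt; lra. }
      assert (D := dneg (Sf t) (Lf t) (2*k) (conj HS0 HS1) (conj HL0 HL1) Wpos ltac:(lra) ltac:(lra) Hk2).
      destruct (rd_bound _ _ _ dS (k/2) ltac:(lra)) as [d1 [Hd1 H1]].
      destruct (rd_bound _ _ _ dL (k/2) ltac:(lra)) as [d2 [Hd2 H2]].
      exists (Rmin d1 d2). split; [apply Rmin_glb_lt; lra|].
      intros h Hh.
      assert (h < d1) by (apply Rlt_le_trans with (Rmin d1 d2); [lra|apply Rmin_l]).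
      assert (h < d2) by (apply Rlt_le_trans with (Rmin d1 d2); [lra|apply Rmin_r]).
      destruct (H1 h ltac:(lra)) as [A _]. destruct (H2 h ltac:(lra)) as [B _].
      set (dSv := clip (Sf t) (Lf t - /2)) in *.
      set (dLv := clip (Lf t) (Sf t - /2)) in *.
      assert (C : h * (dSv + k/2) + h * (dLv + k/2) <= - (h * k)).
      { replace (h * (dSv + k/2) + h * (dLv + k/2)) with (h * (dSv + dLv + k)) by field.
        replace (- (h*k)) with (h * (-k)) by ring.
        apply Rmult_le_compat_l; lra. }
      assert (EE : k * (t + h) = k * t + h * k) by ring.
      assert (0 <= h * k) by (apply Rmult_le_pos; lra). destruct Pt as [Pt|Pt]; [left|right]; lra.
    + assert (St : Sf t = 0) by lra. assert (Lt : Lf t = 0) by lra.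
      destruct (rd_bound _ _ _ dS 1 ltac:(lra)) as [d1 [Hd1 H1]].
      destruct (rd_bound _ _ _ dL 1 ltac:(lra)) as [d2 [Hd2 H2]].
      rewrite St, clip0 in H1. rewrite Lt, clip0 in H2.
      exists (Rmin (Rmin d1 d2) (e/2)). split.
      { apply Rmin_glb_lt; [apply Rmin_glb_lt|]; lra. }
      intros h Hh.
      assert (Hm1 := Rmin_l (Rmin d1 d2) (e/2)). assert (Hm2 := Rmin_r (Rmin d1 d2) (e/2)).
      assert (Hm3 := Rmin_l d1 d2). assert (Hm4 := Rmin_r d1 d2).
      destruct (H1 h ltac:(lra)) as [A _]. destruct (H2 h ltac:(lra)) as [B _].
      right. lra.
  - intros t Ht Hbel.
    destruct (Classical_Prop.classic ((Sf t + Lf t) + k * t <= W0 \/ Sf t + Lf t <= e)) as [|Hn]; [assumption|exfalso].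
    assert (Ha : W0 < Sf t + Lf t + k * t) by (apply Rnot_le_lt; intro; apply Hn; left; assumption).
    assert (Hb : e < Sf t + Lf t) by (apply Rnot_le_lt; intro; apply Hn; right; assumption).
    destruct (Hf t ltac:(lra)) as [_ [_ [Hc _]]]. destruct (Hc Ht) as [cS cL].
    set (eta := Rmin (Sf t + Lf t + k * t - W0) (Sf t + Lf t - e) / 4).
    assert (Heta : 0 < eta) by (unfold eta; assert (0 < Rmin (Sf t + Lf t + k * t - W0) (Sf t + Lf t - e)) by (apply Rmin_glb_lt; lra); lra).
    assert (Ea : eta <= (Sf t + Lf t + k * t - W0) / 4) by (unfold eta; assert (H := Rmin_l (Sf t + Lf t + k * t - W0) (Sf t + Lf t - e)); lra).
    assert (Eb : eta <= (Sf t + Lf t - e) / 4) by (unfold eta; assert (H := Rmin_r (Sf t + Lf t + k * t - W0) (Sf t + Lf t - e)); lra).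
    destruct (cont_bound _ _ cS eta Heta) as [d1 [Hd1 H1]].
    destruct (cont_bound _ _ cL eta Heta) as [d2 [Hd2 H2]].
    set (m := Rmin (Rmin d1 d2) (Rmin t (eta / k))).
    assert (Hm0 : 0 < m).
    { unfold m. apply Rmin_glb_lt; apply Rmin_glb_lt; try lra. apply Rdiv_lt_0_compat; lra. }
    assert (Hm1 := Rmin_l (Rmin d1 d2) (Rmin t (eta / k))). assert (Hm2 := Rmin_r (Rmin d1 d2) (Rmin t (eta / k))).
    assert (Hm3 := Rmin_l d1 d2). assert (Hm4 := Rmin_r d1 d2).
    assert (Hm5 := Rmin_l t (eta / k)). assert (Hm6 := Rmin_r t (eta / k)).
    fold m in Hm1, Hm2.
    assert (km : k * m <= eta).
    { replace eta with (k * (eta / k)) by (field; lra). apply Rmult_le_compat_l; lra. }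
    set (s := t - m / 2).
    assert (Hs : Rabs (s - t) < m).
    { unfold s. replace (t - m/2 - t) with (- (m/2)) by ring. rewrite Rabs_Ropp, Rabs_right; lra. }
    specialize (H1 s ltac:(lra)). specialize (H2 s ltac:(lra)).
    apply Rabs_def2 in H1. apply Rabs_def2 in H2.
    assert (ks : k * s = k * t - k * m / 2) by (unfold s; field).
    destruct (Hbel s ltac:(unfold s; lra)) as [P|P]; lra.
Qed.

Theorem proposition1 (S L : R -> R) :
  clipped_flow S L ->
  0 < S 0 < 1 -> 0 < L 0 < 1 -> L 0 + S 0 < 1 ->
  filterlim L (Rbar_locally p_infty) (locally 0).
Proof.
  intros Hf [HS0 HS1] [HL0 HL1] Hsum.
  set (W0 := S 0 + L 0).
  set (c := Rmin (1 - W0) (/2)).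
  assert (c0 : 0 < c) by (unfold c; apply Rmin_glb_lt; unfold W0; lra).
  assert (c1 : c <= 1 - W0) by apply Rmin_l.
  assert (c2 : c <= /2) by apply Rmin_r.
  set (k := c / 2).
  apply (proj2 (filterlim_locally _ _)). intros eps.
  assert (Heps := cond_pos eps).
  set (e := Rmin (eps / 2) W0).
  assert (e0 : 0 < e) by (unfold e; apply Rmin_glb_lt; unfold W0; lra).
  assert (e1 : e <= eps / 2) by apply Rmin_l.
  assert (e2 : e <= W0) by apply Rmin_r.
  assert (Inv := invariant S L k e Hf ltac:(unfold k; lra) ltac:(fold W0; unfold k; lra) ltac:(unfold k; lra) e0 e2).
  exists (W0 / k + 1). intros x Hx.
  assert (Wk : k * (W0 / k) = W0) by (field; unfold k; lra).
  assert (x0 : 0 <= x).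
  { assert (0 <= W0 / k) by (apply Rdiv_le_0_compat; unfold k, W0; lra). lra. }
  assert (kx : W0 + k <= k * x).
  { replace (W0 + k) with (k * (W0 / k + 1)) by (rewrite Rmult_plus_distr_l, Wk; ring).
    apply Rmult_le_compat_l; [unfold k; lra|lra]. }
  destruct (Hf x x0) as [[Sx0 Sx1] [[Lx0 Lx1] _]].
  apply ballR. rewrite Rminus_0_r, Rabs_right by lra.
  destruct (Inv x x0) as [P|P]; fold W0 in P; unfold k in *; lra.
Qed.
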